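(* Let $K$ be a field, $v:K^*\to\mathbb Z$ a discrete non-archimedean valuation and $T_v$ the Bruhat–Tits tree of $(K,v)$, with its natural action of $GL(2,K)$. Let $\Gamma$ be a finitely generated group, $\chi\in E^1(\Gamma,K)$, and let $\theta:\Gamma\to K$ be a 1-cocycle for $\chi$ whose class in $H^1(\Gamma,\chi)$ is nonzero. Define $\rho:\Gamma\to GL(2,K)$ by $\rho(g)=\begin{pmatrix}\chi(g)&\theta(g)\\0&1\end{pmatrix}$. If $v\circ\chi\in \mathrm{Hom}(\Gamma,\mathbb Z)$ is nonzero, then the action of $\Gamma$ on $T_v$ via $\rho$ is exceptional.
   Context: $E^1(\Gamma,K)$ is the set of characters $\chi:\Gamma\to K^*$ with $H^1(\Gamma,\chi)\ne 0$, where a 1-cocycle is $\theta:\Gamma\to K$ with $\theta(gh)=\theta(g)+\chi(g)\theta(h)$ and coboundaries are $g\mapsto\mu(\chi(g)-1)$. The Bruhat–Tits tree $T_v$ has as vertices homothety classes of free rank-2 $O_v$-submodules (lattices) of $K^2$ spanning $K^2$, where $O_v=\{v\ge0\}$, two vertices being adjacent when representatives $\Lambda\supset\Lambda'$ satisfy $\Lambda/\Lambda'\cong O_v/\mathfrak m_v$; its boundary is $P^1(\hat K_v)$. For a simplicial tree $T$, rays are isometric maps $r:[a,\infty)\to T$, two rays are equivalent if they eventually coincide up to reparametrization by translation, and $\partial T$ is the set of classes. The Busemann function of $r$ is $b_r(x)=\lim_{t\to\infty}(d(x,r(t))-t)$. If $\Gamma$ acts on $T$ fixing $\alpha\in\partial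 T$ represented by $r$, the Busemann cocycle is the homomorphism $\omega_\alpha(g)=b_r\circ g-b_r\in\mathbb Z$. The action is exceptional if $\Gamma$ fixes exactly one point of $\partial T$ and the associated Busemann cocycle is nontrivial. *)

(* Defs.v *)
From HB Require Import structures.
From mathcomp Require Import all_boot all_order all_algebra.
Set Implicit Arguments. Unset Strict Implicit. Unset Printing Implicit Defensive.
Import Order.TTheory GRing.Theory Num.Theory.
Local Open Scope ring_scope.

Section BT.
Variable K : fieldType.

(** Discrete (normalized) non-archimedean valuation v : K^* -> Z.
    The value of [v] at 0 is irrelevant. *)
Definition discrete_valuation (v : K -> int) : Prop :=
  [/\ (forall x y : K, x != 0 -> y != 0 -> v (x * y) = v x + v y),
      (forall x y : K, x != 0 -> y != 0 -> x + y != 0 ->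
          Num.min (v x) (v y) <= v (x + y))
    & (forall n : int, exists x : K, x != 0 /\ v x = n)].

Variable v : K -> int.

Definition inO (x : K) : Prop := x = 0 \/ 0 <= v x.
Definition inm (x : K) : Prop := x = 0 \/ 0 < v x.
Definition congm (x y : K) : Prop := inm (x - y).

Definition vset := 'cV[K]_2 -> Prop.

Definition lattice (L : vset) : Prop :=
  exists b1 b2 : 'cV[K]_2,
    [/\ (forall x, L x <-> exists a c, [/\ inO a, inO c & x = a *: b1 + c *: b2]),
        (forall a c, inO a -> inO c -> a *: b1 + c *: b2 = 0 -> a = 0 /\ c = 0)
      & (forall y : 'cV[K]_2, exists k1 k2 : K, y = k1 *: b1 + k2 *: b2)].

(** Homothety of lattices (vertices of T_v are homothety classes). *)
Definition homot (L1 L2 : vset) : Prop :=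
  exists c : K, c != 0 /\ forall x, L2 x <-> exists y, L1 y /\ x = c *: y.

(** [L' ⊆ L] and [L / L' ≅ O_v / m_v] as O_v-modules: there is an O_v-linear
    surjection L -> O_v/m_v (given by an O_v-valued lift [phi]) with kernel L'. *)
Definition quot_residue (L L' : vset) : Prop :=
  (forall x, L' x -> L x) /\
  exists phi : 'cV[K]_2 -> K,
    [/\ (forall x, L x -> inO (phi x)),
        (forall x y a b, L x -> L y -> inO a -> inO b ->
            congm (phi (a *: x + b *: y)) (a * phi x + b * phi y)),
        (forall c, inO c -> exists x, L x /\ congm (phi x) c)
      & (forall x, L x -> (L' x <-> inm (phi x)))].

Definition adj (L1 L2 : vset) : Prop :=
  exists M1 M2, [/\ lattice M1, lattice M2, homot L1 M1, homot L2 M2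
                  & quot_residue M1 M2 \/ quot_residue M2 M1].

Fixpoint tpath (n : nat) (x y : vset) : Prop :=
  match n with
  | 0 => homot x y
  | n'.+1 => exists z, lattice z /\ adj x z /\ tpath n' z y
  end.

Definition dist (x y : vset) (n : nat) : Prop :=
  tpath n x y /\ forall m, (m < n)%N -> ~ tpath m x y.

Definition is_ray (r : nat -> vset) : Prop :=
  (forall t, lattice (r t)) /\
  forall s t, dist (r s) (r t) (maxn s t - minn s t).

Definition ray_equiv (r1 r2 : nat -> vset) : Prop :=
  exists k m : nat, forall n, homot (r1 (n + k)%N) (r2 (n + m)%N).

Definition act (g : 'M[K]_2) (L : vset) : vset :=
  fun x => exists y, L y /\ x = g *m y.

Definition act_ray (g : 'M[K]_2) (r : nat -> vset) : nat -> vset :=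
  fun t => act g (r t).

Definition busemann (r : nat -> vset) (x : vset) (c : int) : Prop :=
  exists N : nat, forall t : nat, (N <= t)%N ->
    exists n, dist x (r t) n /\ (n%:Z - t%:Z = c).

End BT.

Section Grp.
Local Open Scope group_scope.
Variable G : groupType.

Definition finitely_generated : Prop :=
  exists S : seq G, forall g : G, exists w : seq G,
    all (fun s => (s \in S) || (s^-1 \in S)) w /\ g = \prod_(s <- w) s.
End Grp.

Section Coh.
Variables (G : groupType) (K : fieldType).

Definition is_character (chi : G -> K) : Prop :=
  (forall g, chi g != 0) /\ forall g h, chi (g * h)%g = chi g * chi h.

Definition cocycle (chi theta : G -> K) : Prop :=
  forall g h, theta (g * h)%g = theta g + chi g * theta h.

Definition coboundary (chi theta : G -> K) : Prop :=
  exists mu : K, forall g, theta g = mu * (chi g - 1).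

Definition E1 (chi : G -> K) : Prop :=
  is_character chi /\ exists theta, cocycle chi theta /\ ~ coboundary chi theta.

Definition rho (chi theta : G -> K) (g : G) : 'M[K]_2 :=
  \matrix_(i < 2, j < 2)
    if (i == 0 :> nat) then (if (j == 0 :> nat) then chi g else theta g)
    else (if (j == 0 :> nat) then 0 else 1).

Definition exceptional (v : K -> int) (r : G -> 'M[K]_2) : Prop :=
  exists ray : nat -> vset K,
    [/\ is_ray v ray,
        (forall g, ray_equiv (act_ray (r g) ray) ray),
        (forall ray', is_ray v ray' -> (forall g, ray_equiv (act_ray (r g) ray') ray') ->
            ray_equiv ray' ray)
      & exists g x c1 c2, [/\ lattice v x, busemann v ray (act (r g) x) c1,
                             busemann v ray x c2 & c1 <> c2]].
End Coh.

(* Main.v *)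
Set Warnings "-notation-overridden,-ambiguous-paths,-parsing,-deprecated".
Require Import Defs.
From HB Require Import structures.
From mathcomp Require Import all_boot all_order all_algebra zify ring.
From Stdlib Require Import FunctionalExtensionality PropExtensionality Classical.
Import Order.TTheory GRing.Theory Num.Theory.
Local Open Scope ring_scope.
Set Implicit Arguments. Unset Strict Implicit. Unset Printing Implicit Defensive.
Section Val.
Variable K : fieldType.
Variable v : K -> int.
Hypothesis hv : discrete_valuation v.
Implicit Types (L : vset K).

Lemma vM x y : x != 0 -> y != 0 -> v (x * y) = v x + v y.
Proof. by move: hv => [h _ _]; apply: h. Qed.

Lemma vD x y : x != 0 -> y != 0 -> x + y != 0 -> Num.min (v x) (v y) <= v (x + y).
Proof. by move: hv => [_ h _]; apply: h. Qed.

Lemma vS n : exists x, x != 0 /\ v x = n.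
Proof. by move: hv => [_ _ h]; apply: h. Qed.

Lemma v1 : v 1 = 0.
Proof. have h : v 1 = v 1 + v 1 by rewrite -{1}(mulr1 (1:K)) vM // oner_neq0. lia. Qed.

Lemma vV x : x != 0 -> v x^-1 = - v x.
Proof. move=> x0; have h : v 1 = v x + v x^-1 by rewrite -(mulfV x0) vM // invr_neq0. rewrite v1 in h; lia. Qed.

Lemma vN1 : v (-1) = 0.
Proof.
have n1 : (-1 : K) != 0 by rewrite oppr_eq0 oner_neq0.
have h : v ((-1) * (-1)) = v (-1) + v (-1) by rewrite vM.
rewrite mulrNN mulr1 v1 in h; lia.
Qed.

Lemma vN x : v (- x) = v x.
Proof.
case: (eqVneq x 0) => [->|x0]; first by rewrite oppr0.
have n1 : (-1 : K) != 0 by rewrite oppr_eq0 oner_neq0.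
by rewrite -mulN1r vM // vN1 add0r.
Qed.

Definition ge (t : int) (x : K) := x = 0 \/ t <= v x.

Lemma ge0 t : ge t 0. Proof. by left. Qed.

Lemma geD t x y : ge t x -> ge t y -> ge t (x + y).
Proof.
case: (eqVneq x 0) => [->|x0]; first by rewrite add0r.
case: (eqVneq y 0) => [->|y0]; first by rewrite addr0.
case: (eqVneq (x + y) 0) => [->|s0]; first by left.
move=> [/eqP|hx]; first by rewrite (negbTE x0).
move=> [/eqP|hy]; first by rewrite (negbTE y0).
right; apply: le_trans (vD x0 y0 s0); by rewrite le_min hx hy.
Qed.

Lemma geN t x : ge t x -> ge t (- x).
Proof. by move=> [->|h]; [rewrite oppr0; left | right; rewrite vN]. Qed.

Lemma geB t x y : ge t x -> ge t y -> ge t (x - y).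
Proof. by move=> hx hy; apply: geD hx (geN hy). Qed.

Lemma geM s t x y : ge s x -> ge t y -> ge (s + t) (x * y).
Proof.
move=> [->|hx]; first by rewrite mul0r; left.
move=> [->|hy]; first by rewrite mulr0; left.
case: (eqVneq x 0) => [->|x0]; first by rewrite mul0r; left.
case: (eqVneq y 0) => [->|y0]; first by rewrite mulr0; left.
right; rewrite vM //; lia.
Qed.

Lemma ge_le s t x : s <= t -> ge t x -> ge s x.
Proof. move=> st [->|h]; [left | right] => //; lia. Qed.

Lemma ge_v x : ge (v x) x.
Proof. by right. Qed.

Lemma geE t x : x != 0 -> ge t x -> t <= v x.
Proof. by move=> /eqP x0 [] // . Qed.

Lemma ge_mulC t c x : c != 0 -> ge (t + v c) (c * x) -> ge t x.
Proof.
move=> c0; case: (eqVneq x 0) => [->|x0]; first by left.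
move=> h; right; have := geE (mulf_neq0 c0 x0) h; rewrite vM //; lia.
Qed.

Lemma ge_mulCr t c x : c != 0 -> ge (t + v c) (x * c) -> ge t x.
Proof. by rewrite mulrC; apply: ge_mulC. Qed.

Lemma ge_div t c x : c != 0 -> ge t x -> ge (t - v c) (x / c).
Proof.
move=> c0 h; have := geM h (ge_v (c^-1)); rewrite vV //.
Qed.

Lemma ge_unbounded x : (forall t, ge t x) -> x = 0.
Proof.
move=> h; case: (eqVneq x 0) => // x0; have := geE x0 (h (v x + 1)); lia.
Qed.

Lemma v_sub1 c : 0 < v c -> c != 0 -> v (c - 1) = 0 /\ c - 1 != 0.
Proof.
move=> vc c0.
have c1 : c - 1 != 0 by rewrite subr_eq0; apply/eqP => e; move: vc; rewrite e v1.
split => //.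
have h1 : ge 0 (c - 1) by apply: geB; [right; lia | right; rewrite v1].
have h2 : ge (Num.min (v (c - 1)) (v c)) ((c - 1) - c).
  by apply: geB; right; rewrite ge_min lexx ?orbT.
rewrite (_ : (c - 1) - c = -1) in h2; last by rewrite addrAC subrr add0r.
have := geE c1 h1; move: h2 => [/eqP|]; first by rewrite oppr_eq0 oner_eq0.
rewrite vN1 ge_min => /orP [] ? ?; lia.
Qed.



Definition vec (a b : K) : 'cV[K]_2 :=
  \matrix_(i < 2, j < 1) if (i == 0 :> nat) then a else b.

Lemma vec_eta (z : 'cV[K]_2) : z = vec (z 0 0) (z 1 0).
Proof.
apply/matrixP => i j; rewrite !mxE; rewrite (ord1 j).
by case: i => [[|[|//]]] //= ?; congr (z _ _); apply: val_inj.
Qed.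

Lemma vecE a b a' b' : a = a' -> b = b' -> vec a b = vec a' b'.
Proof. by move=> -> ->. Qed.

Lemma vec_inj a b a' b' : vec a b = vec a' b' -> a = a' /\ b = b'.
Proof.
move=> e; have := congr1 (fun z : 'cV[K]_2 => z 0 0) e.
have := congr1 (fun z : 'cV[K]_2 => z 1 0) e.
by rewrite /= !mxE /=.
Qed.

Lemma vecZ c a b : c *: vec a b = vec (c * a) (c * b).
Proof. by apply/matrixP => i j; rewrite !mxE; case: ifP. Qed.

Lemma vecD a b a' b' : vec a b + vec a' b' = vec (a + a') (b + b').
Proof. by apply/matrixP => i j; rewrite !mxE; case: ifP. Qed.

Lemma vec0 : (0 : 'cV[K]_2) = vec 0 0.
Proof. by apply/matrixP => i j; rewrite !mxE; case: ifP. Qed.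

Lemma lin_vec a c p1 q1 p2 q2 :
  a *: vec p1 q1 + c *: vec p2 q2 = vec (a * p1 + c * p2) (a * q1 + c * q2).
Proof. by rewrite !vecZ vecD. Qed.

Lemma rho_vec (G : groupType) (chi theta : G -> K) g a b :
  rho chi theta g *m vec a b = vec (chi g * a + theta g * b) b.
Proof.
apply/matrixP => i j; rewrite !mxE !big_ord_recr big_ord0 /= !mxE /=.
by case: i => [[|[|//]]] //= _; rewrite add0r ?mul0r ?mul1r ?add0r.
Qed.

Lemma seteq (A B : vset K) : (forall z, A z <-> B z) -> A = B.
Proof.
move=> h; apply: functional_extensionality => z.
by apply: propositional_extensionality.
Qed.

Definition spanO (b1 b2 : 'cV[K]_2) : vset K :=
  fun z => exists a c, [/\ inO v a, inO v c & z = a *: b1 + c *: b2].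

Definition scale (c : K) (L : vset K) : vset K :=
  fun z => exists y, L y /\ z = c *: y.

Definition N (x c : K) := spanO (vec c 0) (vec x 1).

Lemma inO_ge x : inO v x <-> ge 0 x. Proof. by []. Qed.

Lemma inOD a b : inO v a -> inO v b -> inO v (a + b).
Proof. exact: geD. Qed.
Lemma inOM a b : inO v a -> inO v b -> inO v (a * b).
Proof. by move=> ha hb; have := geM ha hb; rewrite addr0. Qed.
Lemma inON a : inO v a -> inO v (- a).
Proof. exact: geN. Qed.
Lemma inO0 : inO v 0. Proof. by left. Qed.
Lemma inO1 : inO v 1. Proof. by right; rewrite v1. Qed.

Lemma span_b1 b1 b2 : spanO b1 b2 b1.
Proof. exists 1, 0; split; [exact: inO1|exact: inO0|by rewrite scale1r scale0r addr0]. Qed.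
Lemma span_b2 b1 b2 : spanO b1 b2 b2.
Proof. exists 0, 1; split; [exact: inO0|exact: inO1|by rewrite scale1r scale0r add0r]. Qed.

Lemma span_closed b1 b2 z w a b : spanO b1 b2 z -> spanO b1 b2 w -> inO v a -> inO v b ->
  spanO b1 b2 (a *: z + b *: w).
Proof.
move=> [a1 [c1 [ha1 hc1 ->]]] [a2 [c2 [ha2 hc2 ->]]] ha hb.
exists (a * a1 + b * a2), (a * c1 + b * c2); split.
- by apply: inOD; apply: inOM.
- by apply: inOD; apply: inOM.
by rewrite !scalerDr !scalerA !scalerDl; rewrite addrACA.
Qed.

Lemma span_sub b1 b2 B1 B2 z : spanO b1 b2 B1 -> spanO b1 b2 B2 ->
  spanO B1 B2 z -> spanO b1 b2 z.
Proof. by move=> h1 h2 [a [c [ha hc ->]]]; apply: span_closed. Qed.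

Lemma span_eq b1 b2 B1 B2 : spanO b1 b2 B1 -> spanO b1 b2 B2 ->
  spanO B1 B2 b1 -> spanO B1 B2 b2 -> spanO B1 B2 = spanO b1 b2.
Proof.
move=> h1 h2 h3 h4; apply: seteq => z; split; first exact: span_sub.
exact: span_sub.
Qed.

Lemma span_swap b1 b2 : spanO b2 b1 = spanO b1 b2.
Proof. by apply: span_eq; rewrite ?span_b1 ?span_b2 //; [exact: span_b2|exact: span_b1|exact: span_b2|exact: span_b1]. Qed.

Lemma scale_span c b1 b2 : scale c (spanO b1 b2) = spanO (c *: b1) (c *: b2).
Proof.
apply: seteq => z; split.
  move=> [y [[a [d [ha hd ->]]] ->]]; exists a, d; split => //.
  by rewrite scalerDr !scalerA mulrC [c * d]mulrC.
move=> [a [d [ha hd ->]]]; exists (a *: b1 + d *: b2); split.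
  by exists a, d.
by rewrite scalerDr !scalerA mulrC [c * d]mulrC.
Qed.

Lemma act_span g b1 b2 : act g (spanO b1 b2) = spanO (g *m b1) (g *m b2).
Proof.
apply: seteq => z; split.
  move=> [y [[a [d [ha hd ->]]] ->]]; exists a, d; split => //.
  by rewrite mulmxDr !scalemxAr.
move=> [a [d [ha hd ->]]]; exists (a *: b1 + d *: b2); split.
  by exists a, d.
by rewrite mulmxDr !scalemxAr.
Qed.

Lemma act_scale g c L : act g (scale c L) = scale c (act g L).
Proof.
apply: seteq => z; split.
  by move=> [y [[w [hw ->]] ->]]; exists (g *m w); split; [exists w|rewrite scalemxAr].
by move=> [y [[w [hw ->]] ->]]; exists (c *: w); split; [exists w|rewrite scalemxAr].
Qed.

Lemma scale1 L : scale 1 L = L.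
Proof.
apply: seteq => z; split; first by move=> [y [hy ->]]; rewrite scale1r.
by move=> hz; exists z; rewrite scale1r.
Qed.

Lemma scaleM c d L : scale c (scale d L) = scale (c * d) L.
Proof.
apply: seteq => z; split.
  by move=> [y [[w [hw ->]] ->]]; exists w; rewrite scalerA.
by move=> [w [hw ->]]; exists (d *: w); split; [exists w|rewrite scalerA].
Qed.

Lemma homotE L1 L2 : homot L1 L2 <-> exists c, c != 0 /\ L2 = scale c L1.
Proof.
split.
  by move=> [c [c0 h]]; exists c; split => //; apply: seteq.
by move=> [c [c0 ->]]; exists c; split.
Qed.

Lemma homot_refl L : homot L L.
Proof. by apply/homotE; exists 1; rewrite oner_neq0 scale1. Qed.

Lemma homot_sym L1 L2 : homot L1 L2 -> homot L2 L1.
Proof.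
move/homotE=> [c [c0 ->]]; apply/homotE; exists c^-1; rewrite invr_neq0 //.
by rewrite scaleM mulVf // scale1.
Qed.

Lemma homot_trans L1 L2 L3 : homot L1 L2 -> homot L2 L3 -> homot L1 L3.
Proof.
move/homotE=> [c [c0 ->]] /homotE [d [d0 ->]]; apply/homotE; exists (d * c).
by rewrite mulf_neq0 // scaleM.
Qed.

Lemma homot_scale c L : c != 0 -> homot L (scale c L).
Proof. by move=> c0; apply/homotE; exists c. Qed.

Lemma homot_act g L1 L2 : homot L1 L2 -> homot (act g L1) (act g L2).
Proof. by move/homotE=> [c [c0 ->]]; apply/homotE; exists c; rewrite act_scale. Qed.

Lemma lattice_vec p1 q1 p2 q2 : p1 * q2 - p2 * q1 != 0 ->
  lattice v (spanO (vec p1 q1) (vec p2 q2)).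
Proof.
move=> d0; exists (vec p1 q1), (vec p2 q2); split => //.
- move=> a c _ _; rewrite lin_vec vec0 => /vec_inj [e1 e2].
  have ea : a = 0.
    have : a * (p1 * q2 - p2 * q1) = 0.
      have -> : a * (p1 * q2 - p2 * q1) = q2 * (a * p1 + c * p2) - p2 * (a * q1 + c * q2) by ring.
      by rewrite e1 e2; ring.
    by move/eqP; rewrite mulf_eq0 (negbTE d0) orbF => /eqP.
  have ec : c = 0.
    have : c * (p1 * q2 - p2 * q1) = 0.
      have -> : c * (p1 * q2 - p2 * q1) = p1 * (a * q1 + c * q2) - q1 * (a * p1 + c * p2) by ring.
      by rewrite e1 e2; ring.
    by move/eqP; rewrite mulf_eq0 (negbTE d0) orbF => /eqP.
  by [].
- move=> y; rewrite [y]vec_eta; set p := y 0 0; set q := y 1 0.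
  exists ((p * q2 - p2 * q) / (p1 * q2 - p2 * q1)), ((p1 * q - q1 * p) / (p1 * q2 - p2 * q1)).
  rewrite lin_vec; apply: vecE; field; exact: d0.
Qed.


Lemma N_lattice x c : c != 0 -> lattice v (N x c).
Proof. by move=> c0; apply: lattice_vec; rewrite mulr1 mulr0 subr0. Qed.

Lemma inO_div a c : a != 0 -> c != 0 -> v a <= v c -> inO v (c / a).
Proof.
move=> a0 c0 h; right; rewrite vM // ?invr_neq0 // vV //; lia.
Qed.

Lemma ge_divO t x c : c != 0 -> t = v c -> ge t x -> inO v (x / c).
Proof.
move=> c0 -> h; have := ge_div c0 h; by rewrite subrr.
Qed.

Lemma N_sub x c x' c' z : c != 0 -> c' != 0 -> v c <= v c' -> ge (v c) (x - x') ->
  N x' c' z -> N x c z.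
Proof.
move=> c0 c1 hc hx hz; rewrite /N in hz *; apply: (span_sub _ _ hz).
  exists (c' / c), 0; split; [exact: inO_div|exact: inO0|].
  by rewrite lin_vec; apply: vecE; field.
exists ((x' - x) / c), 1; split; [|exact: inO1|].
  by apply: (ge_divO c0 erefl); rewrite -opprB; apply: geN.
by rewrite lin_vec; apply: vecE; field.
Qed.

Lemma N_eq x c x' c' : c != 0 -> c' != 0 -> v c = v c' -> ge (v c) (x - x') ->
  N x c = N x' c'.
Proof.
move=> c0 c1 hc hx; apply: seteq => z; split; apply: N_sub => //; rewrite ?hc //.
by rewrite -hc -opprB; apply: geN.
Qed.

Lemma vO a : a != 0 -> inO v a -> 0 <= v a.
Proof. by move=> /eqP a0 [] //. Qed.

Lemma homot_N x c x' c' : c != 0 -> c' != 0 -> homot (N x c) (N x' c') ->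
  v c = v c' /\ ge (v c) (x - x').
Proof.
move=> c0 c1 /homotE [l [l0 hN]].
have i1 : N x' c' (vec x' 1) by exact: span_b2.
have i2 : N x' c' (l *: vec x 1) by rewrite hN; exists (vec x 1); split => //; exact: span_b2.
have i3 : N x' c' (l *: vec c 0) by rewrite hN; exists (vec c 0); split => //; exact: span_b1.
have i4 : N x' c' (vec c' 0) by exact: span_b1.
rewrite hN in i1 i4.
move: i1 => [y [[a [d [ha hd ->]]] e1]].
move: e1; rewrite lin_vec vecZ => /vec_inj [ex' ed].
move: i2 => [e [f [he hf]]]; rewrite vecZ lin_vec => /vec_inj [_ ef].
move: i3 => [e' [f' [he' hf']]]; rewrite vecZ lin_vec => /vec_inj [ec ef'].
move: i4 => [y' [[a'' [d'' [ha'' hd'' ->]]] e4]].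
move: e4; rewrite lin_vec vecZ => /vec_inj [ec' ed''].
have ed1 : l * d = 1 by rewrite [RHS]ed; ring.
have d0 : d != 0 by apply/eqP => d0; move: ed1; rewrite d0 mulr0 => /eqP; rewrite eq_sym oner_eq0.
have hl : l = f by rewrite -[LHS]mulr1 ef; ring.
have vl : v l = 0.
  have : v l + v d = 0 by rewrite -vM // ed1 v1.
  have hl' : inO v l by rewrite hl.
  have := vO l0 hl'; have := vO d0 hd; lia.
have f'0 : f' = 0 by rewrite -[RHS](mulr0 l) ef'; ring.
have d''0 : d'' = 0.
  have : l * d'' = 0 by rewrite [RHS]ed''; ring.
  by move/eqP; rewrite mulf_eq0 (negbTE l0) => /eqP.
have ec2 : l * c = e' * c' by rewrite ec f'0; ring.
have ec3 : c' = l * a'' * c by rewrite [LHS]ec' d''0; ring.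
have e'0 : e' != 0.
  by apply/eqP => e0; move: ec2; rewrite e0 mul0r => /eqP; rewrite mulf_eq0 (negbTE l0) (negbTE c0).
have a''0 : a'' != 0.
  by apply/eqP => e0; move: ec3; rewrite e0 mulr0 mul0r => /eqP; rewrite (negbTE c1).
have v1' : v c' <= v c.
  have : v (l * c) = v e' + v c' by rewrite ec2 vM.
  rewrite vM // vl add0r; have := vO e'0 he'; lia.
have v2 : v c <= v c'.
  have : v c' = v l + v a'' + v c by rewrite [in LHS]ec3 !vM // mulf_neq0.
  rewrite vl add0r; have := vO a''0 ha''; lia.
split; first by apply/eqP; rewrite eq_le v1' v2.
have -> : x - x' = - (l * a * c).
  by rewrite ex' mulrDr mulrA [l * (d * x)]mulrA ed1 mul1r; ring.
apply: geN; rewrite -[v c]add0r; apply: geM => //.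
  by rewrite -vl -[v l]addr0; apply: geM => //; right.
by right.
Qed.

Lemma act_N (G : groupType) (chi theta : G -> K) g x c :
  act (rho chi theta g) (N x c) = N (chi g * x + theta g) (chi g * c).
Proof. by rewrite /N act_span !rho_vec mulr0 addr0 mulr1. Qed.

Lemma N_scale x c l : l != 0 -> scale l (N x c) = spanO (vec (l * c) 0) (vec (l * x) l).
Proof. by move=> l0; rewrite scale_span !vecZ mulr0 mulr1. Qed.


Lemma mem_scale l A z : l != 0 -> (scale l A (l *: z) <-> A z).
Proof.
move=> l0; split; last by move=> hz; exists z.
by move=> [y [hy /(scalerI l0) ->]].
Qed.
Arguments mem_scale {l A z}.

Lemma qr_scale l A B : l != 0 -> quot_residue v (scale l A) (scale l B) -> quot_residue v A B.
Proof.
move=> l0 [hs [phi [hO hlin hsurj hker]]]; split.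
  by move=> z /(mem_scale l0) /hs /(mem_scale l0).
exists (fun z => phi (l *: z)); split.
- by move=> z /(mem_scale l0) /hO.
- move=> x y a b hx hy ha hb.
  have := hlin _ _ _ _ ((mem_scale l0).2 hx) ((mem_scale l0).2 hy) ha hb.
  by rewrite scalerDr !scalerA mulrC [l * b]mulrC -!scalerA.
- move=> c hc; have [x' [[y [hy ->]] hc']] := hsurj c hc.
  by exists y.
- move=> z hz; have := hker _ ((mem_scale l0).2 hz).
  by rewrite mem_scale.
Qed.

Lemma inm_ge x : inm v x <-> ge 1 x.
Proof. by split => -[->|h]; [left|right; lia|left|right; lia]. Qed.

Lemma inm_cong x y : inm v (x - y) -> (inm v x <-> inm v y).
Proof.
rewrite !inm_ge => h; split => hx.
  by have := geB hx h; rewrite opprB addrC subrK.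
by have := geD hx h; rewrite addrC subrK.
Qed.

Lemma inmO a x : inO v a -> inm v x -> inm v (a * x).
Proof. by rewrite !inm_ge => ha hx; have := geM ha hx; rewrite add0r. Qed.

Lemma inm1 : ~ inm v 1.
Proof. by rewrite inm_ge => -[/eqP|]; [rewrite oner_eq0|rewrite v1]. Qed.

Lemma inmD x y : inm v x -> inm v y -> inm v (x + y).
Proof. by rewrite !inm_ge; apply: geD. Qed.

Lemma inm_unit a x : a != 0 -> v a = 0 -> inm v (a * x) -> inm v x.
Proof.
move=> a0 va; rewrite !inm_ge; case: (eqVneq x 0) => [->|x0]; first by left.
by move=> /(geE (mulf_neq0 a0 x0)); rewrite vM // va add0r => h; right.
Qed.

Lemma notinm_unit a : inO v a -> ~ inm v a -> a != 0 /\ v a = 0.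
Proof.
move=> [->|h] hm; first by case: hm; left.
have a0 : a != 0 by apply/eqP => e; apply: hm; left.
split => //; apply/eqP; rewrite eq_le h andbT.
by case: (lerP (v a) 0) => // ?; case: hm; right.
Qed.

Variable p : K.
Hypothesis p0 : p != 0.
Hypothesis vp : v p = 1.

Lemma inm_p : inm v p.
Proof. by right; rewrite vp. Qed.

Lemma inm_divp d : inm v d -> inO v (d / p).
Proof. rewrite inm_ge => h; apply: (ge_divO p0 (esym vp) h). Qed.

Lemma core x c M : c != 0 -> quot_residue v (N x c) M ->
  M = scale p (N x (c / p)) \/ exists a, inO v a /\ M = N (x + c * a) (c * p).
Proof.
move=> c0 [hs [phi [hO hlin hsurj hker]]].
set b1 := vec c 0; set b2 := vec x 1.
have nb1 : N x c b1 by exact: span_b1.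
have nb2 : N x c b2 by exact: span_b2.
set al := phi b1; set be := phi b2.
have hal : inO v al by exact: hO.
have hbe : inO v be by exact: hO.
have memM : forall a d, inO v a -> inO v d ->
    (M (a *: b1 + d *: b2) <-> inm v (a * al + d * be)).
  move=> a d ha hd; have hz : N x c (a *: b1 + d *: b2) by exists a, d.
  rewrite (hker _ hz); apply: inm_cong; exact: hlin.
have Msub : forall z, M z -> exists a d, [/\ inO v a, inO v d & z = a *: b1 + d *: b2].
  by move=> z /hs.
have notboth : ~ (inm v al /\ inm v be).
  move=> [ma mb]; have [z [hz hz1]] := hsurj 1 inO1.
  have [a [d [ha hd ez]]] := hz.
  have h1 := hlin _ _ _ _ nb1 nb2 ha hd; rewrite -ez in h1.
  apply: inm1; have : inm v (a * al + d * be) by apply: inmD; apply: inmO.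
  move/(inm_cong h1)=> hphi; by apply/(inm_cong hz1).
have [mal|nal] := classic (inm v al).
  have nbe : ~ inm v be by move=> mbe; apply: notboth.
  have [be0 vbe] := notinm_unit hbe nbe.
  left; rewrite N_scale //; apply: seteq => z; split.
    move=> hz; have [a [d [ha hd ez]]] := Msub z hz.
    move: hz; rewrite ez memM // => hm.
    have md : inm v d.
      apply: (inm_unit be0 vbe); rewrite mulrC.
      have -> : d * be = (a * al + d * be) - a * al by ring.
      have := inmO ha mal; rewrite inm_ge => h2; rewrite inm_ge; apply: geB => //.
    exists a, (d / p); split => //; first exact: inm_divp.
    rewrite /b1 /b2 !lin_vec; apply: vecE; field; rewrite ?p0 //.
  move=> [e [f [he hf ez]]].
  have -> : z = e *: b1 + (f * p) *: b2.
    by rewrite ez /b1 /b2 !lin_vec; apply: vecE; field; rewrite ?p0 //.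
  apply/memM => //; first by apply: inOM => //; right; rewrite vp.
  apply: inmD; first by apply: (inmO he).
  by rewrite mulrAC; apply: inmO; [apply: inOM|exact: inm_p].
have [al0 val] := notinm_unit hal nal.
right; exists (- be / al); split.
  by apply: inOM => //; [exact: inON|right; rewrite vV // val].
apply: seteq => z; split.
  move=> hz; have [a [d [ha hd ez]]] := Msub z hz.
  move: hz; rewrite ez memM // => hm.
  exists ((a * al + d * be) / (al * p)), d; split => //.
    apply: (ge_divO (t:=1) (mulf_neq0 al0 p0)); first by rewrite vM // val vp.
    by apply/inm_ge.
  rewrite /b1 /b2 !lin_vec; apply: vecE; field; rewrite ?al0 ?p0 //.
move=> [e [f [he hf ez]]].
have -> : z = (e * p + f * (- be / al)) *: b1 + f *: b2.
  by rewrite ez /b1 /b2 !lin_vec; apply: vecE; field; rewrite ?al0 ?p0 //.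
have hw : inO v (- be / al) by apply: inOM => //; [exact: inON|right; rewrite vV // val].
apply/memM => //.
  by apply: inOD; apply: inOM => //; right; rewrite vp.
have -> : (e * p + f * (- be / al)) * al + f * be = (e * al) * p by field; rewrite ?al0 ?p0 //.
by apply: inmO; [apply: inOM|exact: inm_p].
Qed.

Lemma vdivp c : c != 0 -> v (c / p) = v c - 1.
Proof. by move=> c0; rewrite vM ?invr_neq0 // vV // vp. Qed.

Lemma vmulp c : c != 0 -> v (c * p) = v c + 1.
Proof. by move=> c0; rewrite vM // vp. Qed.

Lemma hermite_aux p1 q1 p2 q2 : q2 != 0 -> inO v (q1 / q2) ->
  (forall a c, inO v a -> inO v c -> a *: vec p1 q1 + c *: vec p2 q2 = 0 -> a = 0 /\ c = 0) ->
  exists x c, c != 0 /\ homot (N x c) (spanO (vec p1 q1) (vec p2 q2)).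
Proof.
move=> q20 hw hind; set w := q1 / q2; set al := p1 - w * p2.
have al0 : al != 0.
  apply/eqP => e; have [] := hind (-1) w (inON inO1) hw.
    rewrite lin_vec vec0; apply: vecE.
      by move: e; rewrite /al => /eqP; rewrite subr_eq0 => /eqP ->; ring.
    by rewrite /w; field.
  by move/eqP; rewrite oppr_eq0 oner_eq0.
have -> : spanO (vec p1 q1) (vec p2 q2) = spanO (vec al 0) (vec p2 q2).
  symmetry; apply: span_eq; last exact: span_b2.
  - exists 1, (- w); split; [exact: inO1|exact: inON|].
    by rewrite lin_vec; apply: vecE; rewrite /al /w; field.
  - exact: span_b2.
  - exists 1, w; split; [exact: inO1|exact: hw|].
    by rewrite lin_vec; apply: vecE; rewrite /al /w; field.
exists (p2 / q2), (al / q2); split; first by rewrite mulf_neq0 ?invr_neq0.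
apply/homotE; exists q2; split => //; rewrite N_scale //.
by congr spanO; apply: vecE; field.
Qed.

Lemma hermite L : lattice v L -> exists x c, c != 0 /\ homot (N x c) L.
Proof.
move=> [b1 [b2 [hL hind hsp]]].
have -> : L = spanO b1 b2 by apply: seteq => z; rewrite hL.
move: hind hsp; rewrite [b1]vec_eta [b2]vec_eta.
set p1 := b1 0 0; set q1 := b1 1 0; set p2 := b2 0 0; set q2 := b2 1 0.
move=> hind hsp.
have hind' : forall a c, inO v a -> inO v c -> a *: vec p2 q2 + c *: vec p1 q1 = 0 -> a = 0 /\ c = 0.
  by move=> a c ha hc; rewrite addrC => /(hind _ _ hc ha) [-> ->].
have nz : (q1 != 0) || (q2 != 0).
  have [k1 [k2]] := hsp (vec 0 1); rewrite lin_vec => /vec_inj [_ e].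
  case: (eqVneq q1 0) => [h1|//]; case: (eqVneq q2 0) => [h2|]; last by rewrite orbT.
  by move: e; rewrite h1 h2 !mulr0 addr0 => /eqP; rewrite oner_eq0.
case: (eqVneq q2 0) => [e2|q20].
  have q10 : q1 != 0 by move: nz; rewrite e2 eqxx orbF.
  rewrite -span_swap; apply: hermite_aux => //.
  by rewrite e2 mul0r; exact: inO0.
case: (eqVneq q1 0) => [e1|q10].
  by apply: hermite_aux => //; rewrite e1 mul0r; exact: inO0.
case: (lerP (v q2) (v q1)) => h.
  by apply: hermite_aux => //; apply: inO_div.
rewrite -span_swap; apply: hermite_aux => //; apply: inO_div => //; exact: ltW.
Qed.

Lemma lattice_scale l L : l != 0 -> lattice v L -> lattice v (scale l L).
Proof.
move=> l0 /hermite [x [c [c0 /homotE [m [m0 ->]]]]].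
rewrite scaleM N_scale ?mulf_neq0 //; apply: lattice_vec.
by rewrite mulr0 subr0 !mulf_neq0.
Qed.

Lemma scale_inv l A : l != 0 -> A = scale l (scale l^-1 A).
Proof. by move=> l0; rewrite scaleM mulfV // scale1. Qed.

Lemma classify X Z x c : c != 0 -> adj v X Z -> homot (N x c) X ->
  homot (N x (c / p)) Z \/ exists a, inO v a /\ homot (N (x + c * a) (c * p)) Z.
Proof.
move=> c0 [M1 [M2 [lM1 lM2 hXM1 hZM2 hq]]] hNX.
have hNM1 := homot_trans hNX hXM1.
have hM2Z := homot_sym hZM2.
case: hq => hq.
  move/homotE: hNM1 => [l [l0 eM1]].
  rewrite eM1 (scale_inv M2 l0) in hq.
  have [e|[a [ha e]]] := core c0 (qr_scale l0 hq).
    left; apply: homot_trans (homot_scale (N x (c / p)) p0) _.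
    rewrite -e; apply: homot_trans (homot_sym (homot_scale _ (invr_neq0 l0))) _.
    exact: hM2Z.
  right; exists a; split => //; rewrite -e.
  apply: homot_trans (homot_sym (homot_scale _ (invr_neq0 l0))) _.
  exact: hM2Z.
have [y [d [d0 hNM2]]] := hermite lM2.
move/homotE: (hNM2) => [l [l0 eM2]].
rewrite eM2 (scale_inv M1 l0) in hq.
have hM1' : homot (N x c) (scale l^-1 M1).
  by apply: homot_trans hNM1 (homot_scale _ (invr_neq0 l0)).
have hNZ : homot (N y d) Z by apply: homot_trans hNM2 hM2Z.
have [e|[a [ha e]]] := core d0 (qr_scale l0 hq).
  rewrite e in hM1'.
  have hh := homot_trans hM1' (homot_sym (homot_scale _ p0)).
  have [hv1 hg] := homot_N c0 (mulf_neq0 d0 (invr_neq0 p0)) hh.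
  right; exists ((y - x) / c); split.
    by apply: (ge_divO c0 erefl); rewrite -opprB; apply: geN.
  have -> : x + c * ((y - x) / c) = y by field.
  rewrite (@N_eq y (c * p) y d) ?mulf_neq0 //.
    by rewrite vmulp // hv1 vdivp //; lia.
  by rewrite subrr; exact: ge0.
rewrite e in hM1'.
have [hv1 hg] := homot_N c0 (mulf_neq0 d0 p0) hM1'.
left; rewrite (@N_eq x (c / p) y d) ?mulf_neq0 ?invr_neq0 //.
  by rewrite vdivp // hv1 vmulp //; lia.
have -> : x - y = (x - (y + d * a)) + d * a by ring.
apply: geD.
  by apply: ge_le hg; rewrite vdivp //; lia.
by rewrite vdivp // hv1 vmulp //; apply: ge_le (geM (ge_v d) ha); lia.
Qed.

Lemma tpath_level n X Y x c y d : c != 0 -> d != 0 -> tpath v n X Y ->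
  homot (N x c) X -> homot (N y d) Y -> v d <= v c + n%:Z /\ v c <= v d + n%:Z.
Proof.
elim: n X x c => [|n IH] X x c c0 d0 /=.
  move=> hXY hX hY; have [e _] := homot_N c0 d0 (homot_trans (homot_trans hX hXY) (homot_sym hY)).
  by rewrite e; lia.
move=> [z [lz [hadj hp]]] hX hY.
have [h|[a [ha h]]] := classify c0 hadj hX.
  have := IH z x (c / p) (mulf_neq0 c0 (invr_neq0 p0)) d0 hp h hY.
  rewrite vdivp //; lia.
have := IH z _ (c * p) (mulf_neq0 c0 p0) d0 hp h hY.
rewrite vmulp //; lia.
Qed.

Lemma vec_1 a b : vec a b 1 0 = b.
Proof. by rewrite mxE. Qed.

Lemma qr_parent x c : c != 0 -> quot_residue v (N x c) (scale p (N x (c / p))).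
Proof.
move=> c0; rewrite N_scale //; split.
  move=> z [e [f [he hf ->]]]; exists e, (f * p); split => //.
    by apply: inOM => //; right; rewrite vp.
  by rewrite !lin_vec; apply: vecE; field.
exists (fun z => z 1 0); split.
- by move=> z [a [d [ha hd ->]]]; rewrite lin_vec vec_1 mulr0 add0r mulr1.
- move=> z w a b _ _ _ _; rewrite /congm !mxE subrr; by left.
- move=> d hd; exists (d *: vec x 1); split.
    by exists 0, d; split; [exact: inO0|exact: hd|rewrite scale0r add0r].
  by rewrite /congm vecZ vec_1 mulr1 subrr; left.
- move=> z [a [d [ha hd ->]]]; rewrite lin_vec vec_1 mulr0 add0r mulr1; split.
    move=> [e [f [he hf]]]; rewrite lin_vec => /vec_inj [_ ->].
    by rewrite mulr0 add0r; apply: inmO => //; apply: inm_p.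
  move=> hm; exists a, (d / p); split => //; first exact: inm_divp.
  by rewrite lin_vec; apply: vecE; field.
Qed.

Lemma N_lattice_scale x c : c != 0 -> lattice v (scale p (N x (c / p))).
Proof. by move=> c0; apply: lattice_scale => //; apply: N_lattice; rewrite mulf_neq0 ?invr_neq0. Qed.

Lemma adj_parent x c : c != 0 -> adj v (N x c) (N x (c / p)).
Proof.
move=> c0; exists (N x c), (scale p (N x (c / p))); split.
- exact: N_lattice.
- exact: N_lattice_scale.
- exact: homot_refl.
- exact: homot_scale.
- by left; apply: qr_parent.
Qed.

Lemma adj_child x c : c != 0 -> adj v (N x (c / p)) (N x c).
Proof.
move=> c0; exists (scale p (N x (c / p))), (N x c); split.
- exact: N_lattice_scale.
- exact: N_lattice.
- exact: homot_scale.
- exact: homot_refl.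
- by right; apply: qr_parent.
Qed.

Definition q := p^-1.
Definition ray (t : nat) := N 0 (q ^+ t).

Lemma q0 n : q ^+ n != 0.
Proof. by rewrite expf_neq0 // invr_neq0. Qed.

Lemma vq n : v (q ^+ n) = - (n%:Z).
Proof.
elim: n => [|n IH]; first by rewrite expr0 v1.
rewrite exprSr vM ?q0 ?invr_neq0 // IH /q vV // vp; lia.
Qed.

Lemma rayS t : ray t.+1 = N 0 (q ^+ t / p).
Proof. by rewrite /ray exprSr. Qed.

Lemma ray_lattice t : lattice v (ray t).
Proof. exact: N_lattice (q0 t). Qed.

Lemma tpath_fwd n s : tpath v n (ray s) (ray (s + n)%N).
Proof.
elim: n s => [|n IH] s /=; first by rewrite addn0; exact: homot_refl.
exists (ray s.+1); split; first exact: ray_lattice.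
split; first by rewrite rayS; apply: adj_parent; exact: q0.
by rewrite addnS -addSn; apply: IH.
Qed.

Lemma tpath_bwd n s : tpath v n (ray (s + n)%N) (ray s).
Proof.
elim: n s => [|n IH] s /=; first by rewrite addn0; exact: homot_refl.
exists (ray (s + n)%N); split; first exact: ray_lattice.
split; last exact: IH.
by rewrite addnS rayS; apply: adj_child; exact: q0.
Qed.

Lemma ray_dist s t : dist v (ray s) (ray t) (maxn s t - minn s t)%N.
Proof.
split.
  case: (leqP s t) => h.
    by have := tpath_fwd (t - s) s; rewrite subnKC.
  by have := tpath_bwd (s - t) t; rewrite subnKC // ltnW.
move=> m hm hp.
have := tpath_level (q0 s) (q0 t) hp (homot_refl _) (homot_refl _).
rewrite !vq; lia.
Qed.

Lemma ray_is_ray : is_ray v ray.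
Proof. by split; [exact: ray_lattice|exact: ray_dist]. Qed.

Lemma vp_exp i : v (p ^+ i) = i%:Z.
Proof.
elim: i => [|i IH]; first by rewrite expr0 v1.
rewrite exprSr vM ?expf_neq0 // IH vp; lia.
Qed.

Definition lev (X : vset K) (t : int) := exists x c, [/\ c != 0, homot (N x c) X & v c = t].

Lemma lev_uniq X t t' : lev X t -> lev X t' -> t = t'.
Proof.
move=> [x [c [c0 h1 <-]]] [x' [c' [c1 h2 <-]]].
by have [] := homot_N c0 c1 (homot_trans h1 (homot_sym h2)).
Qed.

Lemma levN x c X : c != 0 -> homot (N x c) X -> lev X (v c).
Proof. by move=> c0 h; exists x, c. Qed.

Section Ray.
Variable R : nat -> vset K.
Hypothesis hR : is_ray v R.

Lemma R_lattice j : lattice v (R j).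
Proof. by case: hR. Qed.

Lemma R_dist s t : dist v (R s) (R t) (maxn s t - minn s t)%N.
Proof. by case: hR. Qed.

Lemma stepR j x c : c != 0 -> homot (N x c) (R j) ->
  homot (N x (c / p)) (R j.+1) \/ exists a, inO v a /\ homot (N (x + c * a) (c * p)) (R j.+1).
Proof.
move=> c0 h; have [hp _] := R_dist j j.+1.
rewrite (_ : (maxn j j.+1 - minn j j.+1)%N = 1%N) in hp; last by lia.
move: hp => [z [lz [hadj hz]]].
have [h1|[a [ha h1]]] := classify c0 hadj h.
  by left; apply: homot_trans h1 hz.
by right; exists a; split => //; apply: homot_trans h1 hz.
Qed.

Definition down j := exists t, lev (R j) t /\ lev (R j.+1) (t + 1).
Definition up j := exists t, lev (R j) t /\ lev (R j.+1) (t - 1).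

Lemma up_or_down j : up j \/ down j.
Proof.
have [x [c [c0 h]]] := hermite (R_lattice j).
have [h1|[a [ha h1]]] := stepR c0 h.
  left; exists (v c); split; first exact: levN h.
  by rewrite -vdivp //; apply: levN h1; rewrite mulf_neq0 ?invr_neq0.
right; exists (v c); split; first exact: levN h.
by rewrite -vmulp //; apply: levN h1; rewrite mulf_neq0.
Qed.

Lemma no_valley j : down j -> up j.+1 -> False.
Proof.
move=> [t [ht1 ht2]] [t' [ht3 ht4]].
have [x [c [c0 h]]] := hermite (R_lattice j).
have e1 := lev_uniq ht1 (levN c0 h).
have [h1|[a [ha h1]]] := stepR c0 h.
  have := lev_uniq ht2 (levN (mulf_neq0 c0 (invr_neq0 p0)) h1).
  rewrite vdivp //; lia.
have cp0 : c * p != 0 by rewrite mulf_neq0.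
have e2 := lev_uniq ht3 (levN cp0 h1).
have e3 := lev_uniq ht2 (levN cp0 h1).
have [h2|[a' [ha' h2]]] := stepR cp0 h1.
  have h3 : homot (N x c) (R j.+2).
    rewrite (@N_eq x c (x + c * a) (c * p / p)) //.
    - by rewrite mulf_neq0 ?invr_neq0.
    - by rewrite mulfK.
    - rewrite opprD addrA subrr add0r; apply: geN.
      by rewrite -[v c]addr0; apply: geM => //; right.
  have hRR : homot (R j) (R j.+2) by apply: homot_trans (homot_sym h) h3.
  have [_ hmin] := R_dist j j.+2.
  by apply: (hmin 0%N) => //; lia.
have := lev_uniq ht4 (levN (mulf_neq0 cp0 p0) h2).
rewrite !vmulp //; lia.
Qed.

Lemma down_succ j : down j -> down j.+1.
Proof. by move=> hd; case: (up_or_down j.+1) => // hu; case: (no_valley hd hu). Qed.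

Lemma down_from J : down J -> forall i, down (J + i).
Proof.
move=> hd; elim => [|i IH]; first by rewrite addn0.
by rewrite addnS; apply: down_succ.
Qed.

Lemma desc j0 : (forall i, down (j0 + i)) -> forall y d, d != 0 -> homot (N y d) (R j0) ->
  forall i, exists y', homot (N y' (d * p ^+ i)) (R (j0 + i)) /\ ge (v d) (y' - y).
Proof.
move=> hd y d d0 h; elim => [|i [y' [h1 g1]]].
  by exists y; rewrite expr0 mulr1 addn0 subrr; split => //; exact: ge0.
have dpi : d * p ^+ i != 0 by rewrite mulf_neq0 // expf_neq0.
have [h2|[a [ha h2]]] := stepR dpi h1.
  have [t [ht1 ht2]] := hd i.
  have := lev_uniq ht1 (levN dpi h1).
  have := lev_uniq ht2 (levN (mulf_neq0 dpi (invr_neq0 p0)) h2).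
  rewrite vdivp //; lia.
exists (y' + d * p ^+ i * a); split.
  by rewrite exprSr mulrA addnS.
have -> : y' + d * p ^+ i * a - y = (y' - y) + d * p ^+ i * a by ring.
apply: geD => //; apply: ge_le (geM (ge_v _) ha).
rewrite vM ?expf_neq0 // vp_exp; lia.
Qed.

End Ray.

Section Grp.
Variable G : groupType.
Variables chi theta : G -> K.
Hypothesis hchi : is_character chi.

Lemma chi0 g : chi g != 0.
Proof. by case: hchi. Qed.

Lemma chiM g h : chi (g * h)%g = chi g * chi h.
Proof. by case: hchi. Qed.

Lemma chi1 : chi 1%g = 1.
Proof.
have := chiM 1%g 1%g; rewrite mulg1 => /eqP.
rewrite -subr_eq0 -{1}(mulr1 (chi 1%g)) -mulrBr mulf_eq0 (negbTE (chi0 _)) /=.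
by rewrite subr_eq0 eq_sym => /eqP.
Qed.

Lemma chiV g : chi (g^-1)%g = (chi g)^-1.
Proof.
have := chiM g (g^-1)%g; rewrite mulgV chi1 => e.
by apply: (mulfI (chi0 g)); rewrite -e mulfV // chi0.
Qed.

Lemma pos_chi : (exists g, v (chi g) != 0) -> exists g, 0 < v (chi g).
Proof.
move=> [g hg]; case: (ltrgt0P (v (chi g))) => h.
- by exists g.
- by exists (g^-1)%g; rewrite chiV vV ?chi0 // oppr_gt0.
- by move: hg; rewrite h eqxx.
Qed.

Lemma act_ray_eq g (t t' : nat) : t'%:Z = t%:Z - v (chi g) ->
  (theta g = 0 \/ v (chi g) - t%:Z <= v (theta g)) ->
  act (rho chi theta g) (ray t) = ray t'.
Proof.
move=> et hth; rewrite /ray act_N mulr0 add0r.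
apply: N_eq; [by rewrite mulf_neq0 ?chi0 ?q0|exact: q0| |].
  by rewrite vM ?chi0 ?q0 // !vq; lia.
rewrite subr0; case: hth => [->|h]; first exact: ge0.
by right; rewrite vM ?chi0 ?q0 // vq.
Qed.

Lemma ray_fixed g : ray_equiv (act_ray (rho chi theta g) ray) ray.
Proof.
set k := (absz (v (chi g)) + absz (v (theta g)))%N.
exists k, (absz (k%:Z - v (chi g))) => n.
rewrite /act_ray (@act_ray_eq g _ (n + absz (k%:Z - v (chi g)))%N); first exact: homot_refl.
  rewrite /k; lia.
case: (eqVneq (theta g) 0) => [->|_]; [by left|right].
rewrite /k; lia.
Qed.

Lemma busemann_ray s : busemann v ray (ray s) (- (s%:Z)).
Proof.
exists s => t hst; exists (t - s)%N; split.
  by have := ray_dist s t; rewrite (maxn_idPr hst) (minn_idPl hst).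
lia.
Qed.

Lemma exc_buse : (exists g, v (chi g) != 0) ->
  exists g x c1 c2, [/\ lattice v x, busemann v ray (act (rho chi theta g) x) c1,
                             busemann v ray x c2 & c1 <> c2].
Proof.
move=> [g hg].
set k := (absz (v (chi g)) + absz (v (theta g)))%N.
set m := absz (k%:Z - v (chi g)).
have e : act (rho chi theta g) (ray k) = ray m.
  apply: act_ray_eq; first by rewrite /m /k; lia.
  case: (eqVneq (theta g) 0) => [->|_]; [by left|right].
  rewrite /k; lia.
exists g, (ray k), (- (m%:Z)), (- (k%:Z)); split.
- exact: ray_lattice.
- by rewrite e; apply: busemann_ray.
- exact: busemann_ray.
move=> h; move: hg; rewrite /m /k in h *; lia.
Qed.


Lemma unique R : is_ray v R -> (forall g, ray_equiv (act_ray (rho chi theta g) R) R) ->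
  ~ coboundary chi theta -> (exists g, 0 < v (chi g)) -> ray_equiv R ray.
Proof.
move=> hR hfix hncb [g0 hg0].
case: (classic (exists j, down R j)) => [[J hJ]|hnd].
  exfalso.
  have hdJ := down_from hR hJ.
  have [x1 [c1 [c10 h1]]] := hermite (R_lattice hR J).
  have D := desc hR hdJ c10 h1.
  have [k [m hkm]] := hfix g0.
  set ch0 := chi g0; set th0 := theta g0.
  have ch00 : ch0 != 0 by exact: chi0.
  have hg0' : 0 < v ch0 := hg0.
  have cpi i : c1 * p ^+ i != 0 by rewrite mulf_neq0 // expf_neq0.
  have hact : forall y d X, homot (N y d) X ->
      homot (N (ch0 * y + th0) (ch0 * d)) (act (rho chi theta g0) X).
    by move=> y d X h; rewrite -act_N; apply: homot_act.
  have emk : m%:Z = k%:Z + v ch0.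
    have [y [hy _]] := D k; have [y2 [hy2 _]] := D m.
    have := homot_trans (hact _ _ _ hy) (hkm J); rewrite /act_ray => hh.
    have [e _] := homot_N (mulf_neq0 ch00 (cpi k)) (cpi m) (homot_trans hh (homot_sym hy2)).
    move: e; rewrite !vM ?mulf_neq0 ?expf_neq0 // !vp_exp; lia.
  have hkm' : (k <= m)%N by lia.
  set x0 := th0 / (1 - ch0).
  have [vs1 s10] := v_sub1 hg0' ch00.
  have claim : forall n, homot (N x0 (c1 * p ^+ (n + k))) (R (J + n + k)%N).
    move=> n; have [y [hy _]] := D (n + k)%N.
    rewrite addnA in hy.
    have hd2 : forall i, down R ((J + n + k) + i)%N.
      by move=> i; rewrite -addnA; apply: (down_from hR (hdJ n)).
    have [y' [hy' gy']] := desc hR hd2 (cpi (n + k)%N) hy (m - k)%N.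
    rewrite (_ : (J + n + k + (m - k))%N = (J + n + m)%N) in hy'; last by lia.
    have hh := homot_trans (hact _ _ _ hy) (hkm (J + n)%N).
    rewrite /act_ray -!addnA in hh; rewrite -!addnA in hy'.
    have [_ g1] := homot_N (mulf_neq0 ch00 (cpi _)) (mulf_neq0 (cpi _) (expf_neq0 _ p0))
        (homot_trans hh (homot_sym hy')).
    set d := c1 * p ^+ (n + k) in g1 gy' hy *.
    have d0 : d != 0 by exact: cpi.
    have g2 : ge (v d) (ch0 * y + th0 - y).
      have -> : ch0 * y + th0 - y = (ch0 * y + th0 - y') + (y' - y) by ring.
      apply: geD => //; apply: ge_le g1; rewrite (vM ch00 d0); lia.
    have g3 : ge (v d) (y - x0).
      apply: (ge_mulC (c := ch0 - 1)) => //; rewrite vs1 addr0.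
      have -> : (ch0 - 1) * (y - x0) = ch0 * y + th0 - y.
        rewrite /x0; field; by rewrite subr_eq0 eq_sym -subr_eq0.
      exact: g2.
    rewrite (@N_eq x0 d y d) //; rewrite -opprB; exact: geN.
  apply: hncb; exists (- x0); move=> g.
  have [k' [m' h']] := hfix g.
  have hactg : forall y d X, homot (N y d) X ->
      homot (N (chi g * y + theta g) (chi g * d)) (act (rho chi theta g) X).
    by move=> y d X h; rewrite -act_N; apply: homot_act.
  have Dz : forall t, ge t (chi g * x0 + theta g - x0).
    move=> t; set n := absz (t - v (chi g) - v c1)%R.
    have hA := claim (n + k')%N; have hB := claim (n + m')%N.
    have hh := h' (J + n + k)%N; rewrite /act_ray in hh.
    rewrite (_ : (J + n + k + k')%N = (J + (n + k') + k)%N) in hh; last by lia.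
    rewrite (_ : (J + n + k + m')%N = (J + (n + m') + k)%N) in hh; last by lia.
    have hc := homot_trans (homot_trans (hactg _ _ _ hA) hh) (homot_sym hB).
    have [_ g1] := homot_N (mulf_neq0 (chi0 g) (cpi _)) (cpi _) hc.
    apply: ge_le g1; rewrite !vM ?chi0 ?expf_neq0 // vp_exp /n; lia.
  have e := ge_unbounded Dz.
  have -> : theta g = (chi g * x0 + theta g - x0) - chi g * x0 + x0 by ring.
  by rewrite e; ring.
have hup : forall j, up R j.
  by move=> j; case: (up_or_down hR j) => // hd; case: hnd; exists j.
have [x [c [c0 h0]]] := hermite (R_lattice hR 0).
have cq n : c * q ^+ n != 0 by rewrite mulf_neq0 // q0.
have hn : forall n, homot (N x (c * q ^+ n)) (R n).
  elim => [|n IH]; first by rewrite expr0 mulr1.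
  have [h1|[a [ha h1]]] := stepR hR (cq n) IH.
    by rewrite exprSr mulrA.
  have [t [ht1 ht2]] := hup n.
  have := lev_uniq ht1 (levN (cq n) IH).
  have := lev_uniq ht2 (levN (mulf_neq0 (cq n) p0) h1).
  rewrite vmulp ?cq //; lia.
set k := (absz (v c) + absz (v x))%N.
exists k, (absz (k%:Z - v c)) => n.
apply: homot_trans (homot_sym (hn (n + k)%N)) _.
rewrite /ray (@N_eq x _ 0 (q ^+ (n + absz (k%:Z - v c)))) ?q0 //; first exact: homot_refl.
  by rewrite vM ?q0 // !vq /k; lia.
rewrite subr0; case: (eqVneq x 0) => [->|_]; first exact: ge0.
by right; rewrite vM ?q0 // vq /k; lia.
Qed.
End Grp.
End Val.

Theorem proposition6 (K : fieldType) (v : K -> int) (G : groupType)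
    (chi theta : G -> K) :
  discrete_valuation v ->
  finitely_generated G ->
  E1 chi ->
  cocycle chi theta ->
  ~ coboundary chi theta ->
  (exists g : G, v (chi g) != 0) ->
  exceptional v (rho chi theta).
Proof.
move=> hv _ [hchi _] _ hncb hex.
have [p [p0 vp]] := vS hv 1.
exists (ray v p); split.
- exact: ray_is_ray.
- exact: ray_fixed.
- move=> R hR hfix; apply: (unique hv p0 vp hchi hR hfix hncb).
  exact: pos_chi.
- exact: exc_buse.
Qed.
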